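(* Let $(G,P)$ be an instance of Edge Disjoint Paths in which every vertex occurs in at most one pair of $P$. Let $X\subseteq E(G)$ be a feedback edge set of $G$ and let $Y$ be the set of vertices incident to at least one edge of $X$. Let $L$ be a connected component of $G-Y$ such that there is exactly one edge $\{\ell,y\}$ of $G$ with $\ell\in V(L)$ and $y\in Y$. Then: (a) if $L$ contains no unmatched terminal and $(L,P_L)$ is a YES-instance of EDP, then $(G,P)$ is a YES-instance if and only if $(G-V(L),\,P\setminus P_L)$ is a YES-instance; (b) if $L$ contains exactly one unmatched terminal $s$ (with $\{s,t\}\in P$, $t\notin V(L)$) and $(L,P_L\cup\{\{s,\ell\}\})$ is a YES-instance of EDP (where the pair $\{s,\ell\}$ is omitted if $s=\ell$), then $(G,P)$ is a YES-instance if and only if $(G',P\setminus P_L)$ is a YES-instance, where $G'$ is obtained from $G-V(L)$ by adding the vertex $s$ and the edge $\{y,s\}$; (c) in all other cases (i.e., $L$ contains at least two unmatched terminals, or $L$ contains no unmatched terminal and $(L,P_L)$ is a NO-instance, or $L$ contains exactly one unmatched terminal $s$ and $(L,P_L\cup\{\{s,\ell\}\})$ is a NO-instance), $(G,P)$ is a NO-instance.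
   Context: Edge Disjoint Paths (EDP): given an undirected graph $G$ and a set $P$ of terminal pairs (2-element subsets of $V(G)$), decide whether there exist pairwise edge-disjoint paths in $G$, one for each pair $\{s,t\}\in P$, connecting $s$ and $t$. A feedback edge set of $G$ is a set $X\subseteq E(G)$ such that $G-X$ is a forest. For a subgraph $H$ of $G$, $P_H\subseteq P$ is the set of pairs with both endpoints in $V(H)$, and $H$ contains an unmatched terminal $s$ if $\{s,t\}\in P$ with $s\in V(H)$ and $t\notin V(H)$. *)

(* Defs.v *)
(* Graphs: vertex set V : {set T} over a finType T,
   edge set E : {set {set T}} (each edge a 2-element subset of V). *)
From mathcomp Require Import all_boot.
Set Implicit Arguments. Unset Strict Implicit. Unset Printing Implicit Defensive.

Section EDP.
Variable T : finType.

Definition wf_graph (V : {set T}) (E : {set {set T}}) : Prop :=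
  forall e, e \in E -> #|e| = 2 /\ e \subset V.
Definition wf_pairs (V : {set T}) (P : {set {set T}}) : Prop :=
  forall p, p \in P -> #|p| = 2 /\ p \subset V.

Definition adj (E : {set {set T}}) : rel T := fun u v => [set u; v] \in E.

(* a path given by its first vertex and the remaining vertices *)
Definition is_path (V : {set T}) (E : {set {set T}}) (w : T * seq T) : bool :=
  [&& path (adj E) w.1 w.2, uniq (w.1 :: w.2) & all (fun v => v \in V) (w.1 :: w.2)].
Definition ends (w : T * seq T) : {set T} := [set w.1; last w.1 w.2].
Definition pedges (w : T * seq T) : {set {set T}} :=
  [set e | e \in [seq [set a.1; a.2] | a <- zip (w.1 :: w.2) w.2]].

Definition EDP (V : {set T}) (E : {set {set T}}) (P : {set {set T}}) : Prop :=
  exists f : {set T} -> T * seq T,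
    (forall p, p \in P -> is_path V E (f p) /\ ends (f p) = p) /\
    (forall p q, p \in P -> q \in P -> p != q -> [disjoint pedges (f p) & pedges (f q)]).

(* forest: no cycle (on at least 3 distinct vertices) *)
Definition forest (V : {set T}) (E : {set {set T}}) : Prop :=
  ~ exists (x : T) (s : seq T),
      [/\ 2 <= size s, is_path V E (x, s) & adj E (last x s) x].

Definition feedback_edge_set (V : {set T}) (E X : {set {set T}}) : Prop :=
  X \subset E /\ forest V (E :\: X).

Definition incident (X : {set {set T}}) : {set T} := \bigcup_(e in X) e.

Definition induced (E : {set {set T}}) (S : {set T}) : {set {set T}} :=
  [set e in E | e \subset S].

Definition reach (V : {set T}) (E : {set {set T}}) (u v : T) : Prop :=
  exists s : seq T, [/\ path (adj E) u s, all (fun x => x \in V) (u :: s) & last u s = v].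

Definition component (V : {set T}) (E : {set {set T}}) (C : {set T}) : Prop :=
  exists u, u \in V /\ forall v, v \in C <-> (v \in V /\ reach V E u v).

Definition inner_pairs (P : {set {set T}}) (H : {set T}) : {set {set T}} :=
  [set p in P | p \subset H].

Definition unmatched (P : {set {set T}}) (H : {set T}) : {set T} :=
  [set s in H | [exists p in P, (s \in p) && ~~ (p \subset H)]].

Definition pairs_with (P : {set {set T}}) (H : {set T}) (s l : T) : {set {set T}} :=
  inner_pairs P H :|: (if s == l then set0 else [set [set s; l]]).

End EDP.

(* Main.v *)
Require Import Defs.
From mathcomp Require Import all_boot.
Set Implicit Arguments. Unset Strict Implicit. Unset Printing Implicit Defensive.

Section Gen.
Variable T : finType.
Implicit Types (E : {set {set T}}) (A : {set T}) (x : T) (s : seq T).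

Lemma set2C' (u v : T) : [set u; v] = [set v; u].
Proof. by rewrite setUC. Qed.

Lemma adjC E u v : adj E u v = adj E v u.
Proof. by rewrite /adj set2C'. Qed.

Lemma disjP (U : finType) (A B : {set U}) :
  (forall z, z \in A -> z \in B -> False) -> [disjoint A & B].
Proof.
move=> H; rewrite -setI_eq0; apply/eqP/setP => z; rewrite !inE.
by apply/negbTE/negP => /andP[a b]; apply: (H z).
Qed.

Lemma disjE (U : finType) (A B : {set U}) z :
  [disjoint A & B] -> z \in A -> z \in B -> False.
Proof.
rewrite -setI_eq0 => /eqP/setP/(_ z); rewrite !inE => H a b.
by rewrite a b in H.
Qed.

Lemma last_rev' (d : T) s : last d (rev s) = head d s.
Proof. by case: s => [|z s] //=; rewrite rev_cons last_rcons. Qed.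

Lemma pedges_nil x : pedges (x, [::]) = set0.
Proof. by apply/setP=> e; rewrite !inE. Qed.

Lemma pedges_cons x z s : pedges (x, z :: s) = [set x; z] |: pedges (z, s).
Proof. by apply/setP=> e; rewrite /pedges !inE /=. Qed.

Lemma pedges_cat x s1 b s2 :
  pedges (x, s1 ++ b :: s2) = pedges (x, s1) :|: ([set last x s1; b] |: pedges (b, s2)).
Proof.
elim: s1 x => [|z s1 IH] x /=; first by rewrite pedges_nil set0U pedges_cons.
by rewrite !pedges_cons IH setUA.
Qed.

Lemma pedges_rcons x s z : pedges (x, rcons s z) = [set last x s; z] |: pedges (x, s).
Proof.
elim: s x => [|w s IH] x /=; first by rewrite pedges_cons !pedges_nil.
by rewrite !pedges_cons IH setUCA.
Qed.

Lemma last_revb x s : last (last x s) (rev (belast x s)) = x.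
Proof.
have -> : last (last x s) (rev (belast x s)) = last x (last x s :: rev (belast x s)) by [].
by rewrite -rev_rcons -lastI last_rev'.
Qed.

Lemma pedges_rev x s : pedges (last x s, rev (belast x s)) = pedges (x, s).
Proof.
elim: s x => [|z s IH] x //=.
by rewrite rev_cons pedges_rcons IH pedges_cons last_revb set2C'.
Qed.

Lemma pedges_form E x s e : e \in pedges (x, s) ->
  exists u v, [/\ e = [set u; v], u \in x :: s, v \in x :: s & (path (adj E) x s -> adj E u v)].
Proof.
elim: s x => [|z s IH] x; first by rewrite pedges_nil inE.
rewrite pedges_cons in_setU1 => /orP[/eqP->|h]; last have [u [v [-> hu hv hp]]] := IH _ h.
  by exists x, z; rewrite !inE !eqxx orbT; split=> // /andP[].
exists u, v; split=> //; first by rewrite inE hu orbT.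
  by rewrite inE hv orbT.
by move=> /= /andP[_ /hp].
Qed.

Lemma pedges_E E x s e : path (adj E) x s -> e \in pedges (x, s) -> e \in E.
Proof. by move=> p /(pedges_form E) [u [v [-> _ _ /(_ p)]]]. Qed.

Lemma pedges_sub A x s e : all (fun v => v \in A) (x :: s) -> e \in pedges (x, s) -> e \subset A.
Proof.
move=> /allP al /(pedges_form set0) [u [v [-> hu hv _]]].
by apply/subsetP => w; rewrite !inE => /orP[]/eqP->; apply: al.
Qed.

Lemma pedges_sep A (B : {set T}) x s e : e \in pedges (x, s) -> e \subset A -> e \subset B ->
  [disjoint A & B] -> False.
Proof.
move=> /(pedges_form set0) [u [v [-> _ _ _]]] sA sB d.
apply: (disjE (z := u) d); [apply: (subsetP sA)|apply: (subsetP sB)]; by rewrite !inE eqxx.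
Qed.

Definition cross E A a b := forall u v, adj E u v -> u \in A -> v \notin A -> u = a /\ v = b.

Lemma stay E A a b x s : cross E A a b -> path (adj E) x s -> x \in A -> b \notin s ->
  all (fun v => v \in A) (x :: s).
Proof.
move=> cr; elim: s x => [|z s IH] x /=; first by rewrite andbT.
case/andP=> axz pzs xA; rewrite inE negb_or => /andP[bz bs].
rewrite xA /=.
have zA : z \in A.
  apply/negPn/negP => zA; have [_ e] := cr _ _ axz xA zA.
  by rewrite e eqxx in bz.
exact: (IH z pzs zA bs).
Qed.

Lemma cross_compl E A a b : cross E A a b -> cross E (~: A) b a.
Proof.
move=> cr u v h; rewrite !inE negbK => uA vA.
have h' : adj E v u by rewrite adjC.
by have [? ?] := cr v u h' vA uA.
Qed.

Lemma all_compl A s : all (fun v : T => v \in ~: A) s = all (fun v : T => v \notin A) s.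
Proof. by apply: eq_all => v; rewrite inE. Qed.

Lemma split_cross E A a b x s : cross E A a b ->
  path (adj E) x s -> uniq (x :: s) -> x \in A ->
  all (fun v => v \in A) (x :: s) \/
  exists s1 s2, [/\ s = s1 ++ b :: s2, last x s1 = a,
     all (fun v => v \in A) (x :: s1) & all (fun v => v \notin A) (b :: s2)].
Proof.
move=> cr; elim: s x => [|z s IH] x; first by move=> _ _ xA; left; rewrite /= xA.
rewrite [path _ _ _]/= [uniq _]/= => /andP[axz pzs] /andP[xn uz] xA.
case: (boolP (z \in A)) => zA.
  case: (IH z pzs uz zA) => [al|[s1 [s2 [-> l1 a1 a2]]]].
    by left; apply/andP; split.
  by right; exists (z :: s1), s2; split=> //; apply/andP; split.
have [ex ez] := cr _ _ axz xA zA.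
right; exists [::], s; split=> //; first by rewrite ez.
  by rewrite /= xA.
suff: all (fun v : T => v \in ~: A) (z :: s) by rewrite all_compl ez.
apply: (stay (cross_compl cr) pzs); first by rewrite inE zA.
by move: xn; rewrite ex inE negb_or => /andP[].
Qed.

Lemma both_in E A a b x s : cross E A a b ->
  path (adj E) x s -> uniq (x :: s) -> x \in A -> last x s \in A ->
  all (fun v => v \in A) (x :: s).
Proof.
move=> cr p u xA lA; case: (split_cross cr p u xA) => // [[s1 [s2 [e _ _ a2]]]].
move: lA; rewrite e last_cat /= => lA.
by move/allP: a2 => /(_ (last b s2) (mem_last _ _)); rewrite lA.
Qed.

Lemma path_rel (e e' : rel T) (Q : pred T) x s : path e x s -> all Q (x :: s) ->
  (forall u v, Q u -> Q v -> e u v -> e' u v) -> path e' x s.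
Proof.
move=> + + H; elim: s x => [|z s IH] x //= /andP[exz pzs] /and3P[qx qz qs].
by rewrite (H _ _ qx qz exz) IH //= qz.
Qed.

Lemma adj_induced E A u v : u \in A -> v \in A -> adj E u v -> adj (induced E A) u v.
Proof.
by move=> uA vA; rewrite /adj inE => ->; rewrite subUset !sub1set uA vA.
Qed.

Lemma adj_induced_sub E A u v : adj (induced E A) u v -> adj E u v.
Proof. by rewrite /adj inE => /andP[]. Qed.

Lemma path_induced E A x s : path (adj E) x s -> all (fun v => v \in A) (x :: s) ->
  path (adj (induced E A)) x s.
Proof. by move=> p al; apply: (path_rel p al) => u v; apply: adj_induced. Qed.

Lemma is_path_mono (V : {set T}) E (V' : {set T}) E' w : is_path V' E' w -> V' \subset V ->
  (forall u v, adj E' u v -> adj E u v) -> is_path V E w.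
Proof.
case: w => x s; rewrite /is_path => /and3P[p u a] sV sE.
apply/and3P; split => //; first exact: (sub_path sE p).
apply/allP => v /(allP a); exact: (subsetP sV).
Qed.

Lemma is_path_rev (V : {set T}) E x s : is_path V E (x, s) -> is_path V E (last x s, rev (belast x s)).
Proof.
rewrite /is_path => /and3P[p u a].
change [&& path (adj E) (last x s) (rev (belast x s)), uniq (last x s :: rev (belast x s))
  & all (fun v => v \in V) (last x s :: rev (belast x s))].
have e : last x s :: rev (belast x s) = rev (x :: s) by rewrite [in RHS]lastI rev_rcons.
rewrite e rev_uniq all_rev u a rev_path !andbT.
by rewrite (eq_path (e' := adj E)) // => v w; rewrite /= adjC.
Qed.

Lemma reorient (V : {set T}) E w a : is_path V E w -> a \in ends w ->
  exists s, [/\ is_path V E (a, s), ends (a, s) = ends w & pedges (a, s) = pedges w].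
Proof.
case: w => x r ip; rewrite /ends /= => /set2P[->|->]; first by exists r.
exists (rev (belast x r)); split.
- exact: is_path_rev.
- by rewrite /ends /= last_revb set2C'.
- exact: pedges_rev.
Qed.

Lemma two_in (p : {set T}) a b : #|p| = 2 -> a \in p -> b \in p -> a != b -> p = [set a; b].
Proof.
move=> c ap bp ab; apply/esym/eqP; rewrite eqEcard cards2 ab c andbT.
by rewrite subUset !sub1set ap bp.
Qed.

Lemma ends_last x s b : ends (x, s) = [set x; b] -> x != b -> last x s = b.
Proof.
rewrite /ends /= => e xb; have : b \in [set x; last x s] by rewrite e set22.
by case/set2P => // bx; rewrite bx eqxx in xb.
Qed.
End Gen.

Section Main.
Variables (T : finType) (V : {set T}) (E P : {set {set T}}) (VL : {set T}) (l y : T).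
Hypotheses (wfG : wf_graph V E) (wfP : wf_pairs V P)
  (uP : forall p q v, p \in P -> q \in P -> v \in p -> v \in q -> p = q)
  (cr : cross E VL l y) (subVL : VL \subset V) (lVL : l \in VL) (yVL : y \notin VL)
  (yV : y \in V) (lyE : [set l; y] \in E).

Lemma crC : cross E (~: VL) y l.
Proof. exact: cross_compl cr. Qed.

Lemma exit_edge x s : is_path V E (x, s) -> (x \in VL) != (last x s \in VL) ->
  [set l; y] \in pedges (x, s).
Proof.
case/and3P => /= p u a; case: (boolP (x \in VL)) => xA ne.
  have lA : last x s \notin VL by move: ne; case: (last x s \in VL).
  case: (split_cross cr p u xA) => [al|[s1 [s2 [-> l1 _ _]]]].
    by move/allP: al => /(_ _ (mem_last x s)); rewrite (negbTE lA).
  by rewrite pedges_cat l1 in_setU in_setU1 eqxx orbT.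
have xA' : x \in ~: VL by rewrite inE.
case: (split_cross crC p u xA') => [al|[s1 [s2 [-> l1 _ _]]]].
  have lA : last x s \in VL by move: ne; case: (last x s \in VL).
  by move/allP: al => /(_ _ (mem_last x s)); rewrite inE lA.
by rewrite pedges_cat l1 in_setU in_setU1 set2C' eqxx orbT.
Qed.

Lemma unmatchedP v : v \in unmatched P VL <->
  v \in VL /\ exists p, [/\ p \in P, v \in p & ~~ (p \subset VL)].
Proof.
rewrite inE; split.
  by case/andP => vA /existsP [p /andP[pP /andP[vp np]]]; split=> //; exists p.
case=> vA [p [pP vp np]]; rewrite vA /=; apply/existsP; exists p.
by rewrite pP vp np.
Qed.

Lemma in_path x s : is_path V E (x, s) -> x \in VL -> last x s \in VL ->
  is_path VL (induced E VL) (x, s).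
Proof.
move=> ip xA lA; case/and3P: (ip) => p u a.
have al := both_in cr p u xA lA.
by apply/and3P; split => //; apply: path_induced.
Qed.

Lemma out_path x s : is_path V E (x, s) -> x \notin VL -> last x s \notin VL ->
  is_path (V :\: VL) (induced E (V :\: VL)) (x, s) /\
  all (fun v => v \in V :\: VL) (x :: s).
Proof.
move=> ip xA lA; case/and3P: (ip) => p u a.
have xA' : x \in ~: VL by rewrite inE.
have lA' : last x s \in ~: VL by rewrite inE.
have al0 := both_in crC p u xA' lA'.
have al : all (fun v => v \in V :\: VL) (x :: s).
  apply/allP => v vin; rewrite inE (allP a v vin) andbT.
  by have := allP al0 v vin; rewrite inE.
by split=> //; apply/and3P; split => //; apply: path_induced.
Qed.

Lemma ends_in x s (p : {set T}) : ends (x, s) = p -> x \in p /\ last x s \in p.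
Proof. by rewrite /ends /= => <-; rewrite set21 set22. Qed.

Lemma ends_neq x s (p : {set T}) : p \in P -> ends (x, s) = p -> x != last x s.
Proof.
move=> pP e; have := (wfP pP).1; rewrite -e /ends /= cards2.
by case: (x != last x s).
Qed.

Lemma c_restrict : EDP V E P -> EDP VL (induced E VL) (inner_pairs P VL).
Proof.
case=> f [Hp Hd]; exists f; split.
  move=> p; rewrite inE => /andP[pP sp]; have [ip e] := Hp p pP; split=> //.
  move: ip e; case: (f p) => x s ip e; have [xp lp] := ends_in e.
  by apply: in_path => //; apply: (subsetP sp).
move=> p q; rewrite !inE => /andP[pP _] /andP[qP _]; exact: Hd.
Qed.

Lemma c_two : 1 < #|unmatched P VL| -> ~ EDP V E P.
Proof.
case/card_gt1P => s1 [s2 [/unmatchedP [s1A [p1 [p1P s1p n1]]] /unmatchedP [s2A [p2 [p2P s2p n2]]] ne]].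
case=> f [Hp Hd].
have ex : forall p v, p \in P -> v \in p -> v \in VL -> ~~ (p \subset VL) ->
    [set l; y] \in pedges (f p).
  move=> p v pP vp vA np; have [ip e] := Hp p pP; move: ip e.
  case: (f p) => x s ip e; apply: exit_edge => //.
  have [xp lp] := ends_in e.
  move: np; rewrite -e /ends /= subUset !sub1set.
  case xA: (x \in VL); case lA: (last x s \in VL) => //= _.
  by move: vp vA; rewrite -e /ends /= => /set2P[]->; rewrite ?xA ?lA.
have pne : p1 != p2.
  apply/eqP => e; subst p2.
  have := two_in (wfP p1P).1 s1p s2p ne => e1.
  by move: n1; rewrite e1 subUset !sub1set s1A s2A.
exact: (disjE (Hd _ _ p1P p2P pne) (ex _ _ p1P s1p s1A n1) (ex _ _ p2P s2p s2A n2)).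
Qed.

Lemma inner_ok (f : {set T} -> T * seq T) q :
  (forall p, p \in P -> is_path V E (f p) /\ ends (f p) = p) ->
  q \in P -> q \subset VL -> is_path VL (induced E VL) (f q).
Proof.
move=> Hp qP sq; have [ip e] := Hp q qP.
move: ip e; case: (f q) => x s ip e; have [xp lp] := ends_in e.
by apply: in_path => //; apply: (subsetP sq).
Qed.

Lemma c_one s : s \in unmatched P VL -> EDP V E P ->
  EDP VL (induced E VL) (pairs_with P VL s l).
Proof.
move=> /unmatchedP [sA [ps [psP sps nps]]] [f [Hp Hd]].
case: (eqVneq s l) => [esl|nsl].
  rewrite /pairs_with esl eqxx setU0; apply: c_restrict; by exists f.
rewrite /pairs_with (negbTE nsl).
have [ip e] := Hp ps psP.
have sin : s \in ends (f ps) by rewrite e.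
have [w [ipw ew pw]] := reorient ip sin.
have lnot : last s w \notin VL.
  by move: nps; rewrite -e -ew /ends /= subUset !sub1set sA.
have /and3P[pw' uw aw] : [&& path (adj E) s w, uniq (s :: w) & all (fun v => v \in V) (s :: w)] := ipw.
case: (split_cross cr pw' uw sA) => [al | [s1 [s2 [ew2 l1 a1 a2]]]].
  by move/allP: al => /(_ _ (mem_last s w)); rewrite (negbTE lnot).
rewrite {}ew2 in ipw ew pw pw' uw aw lnot.
have sub1 : pedges (s, s1) \subset pedges (f ps) by rewrite -pw pedges_cat subsetUl.
have dd : forall q, q \in inner_pairs P VL -> [disjoint pedges (s, s1) & pedges (f q)].
  move=> q; rewrite inE => /andP[qP sq]; apply: (disjointWl sub1); apply: Hd => //.
  by apply/eqP => epq; move: nps; rewrite epq sq.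
exists (fun q => if q == [set s; l] then (s, s1) else f q); split.
  move=> q; rewrite in_setU in_set1; case: eqP => [-> _ | _ ]; last rewrite orbF => qPL.
    split; last by rewrite /ends /= l1.
    move: pw' uw; rewrite cat_path => /andP[p1 _].
    have -> : uniq (s :: s1 ++ y :: s2) = uniq ((s :: s1) ++ (y :: s2)) by [].
    rewrite cat_uniq => /and3P[u1 _ _].
    by apply/and3P; split => //; apply: path_induced.
  split; first by move: qPL; rewrite inE => /andP[qP sq]; exact: (inner_ok Hp qP sq).
  by move: qPL; rewrite inE => /andP[qP _]; have [] := Hp q qP.
move=> p q; rewrite !in_setU !in_set1.
case: (eqVneq p [set s; l]) => [-> | np]; case: (eqVneq q [set s; l]) => [-> | nq] //=.
- by rewrite orbF => _ qPL _; apply: dd.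
- by rewrite orbF => pPL _ _; rewrite disjoint_sym; apply: dd.
- rewrite !orbF !inE => /andP[pP _] /andP[qP _]; exact: Hd.
Qed.

Lemma PminusE p : (p \in P :\: inner_pairs P VL) = (p \in P) && ~~ (p \subset VL).
Proof. by rewrite !inE; case: (p \in P); rewrite ?andbT. Qed.

Lemma pedges_subV (A : {set T}) E' w e : is_path A E' w -> e \in pedges w -> e \subset A.
Proof. case: w => x s /and3P[_ _ a]; exact: pedges_sub a. Qed.

Lemma disjVL : [disjoint VL & V :\: VL].
Proof. by apply: disjP => z zA; rewrite inE zA. Qed.

Lemma a_fwd : unmatched P VL = set0 -> EDP V E P ->
  EDP (V :\: VL) (induced E (V :\: VL)) (P :\: inner_pairs P VL).
Proof.
move=> U0 [f [Hp Hd]]; exists f; split.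
  move=> p; rewrite PminusE => /andP[pP np]; have [ip e] := Hp p pP; split => //.
  have nv : forall v, v \in p -> v \notin VL.
    move=> v vp; apply/negP => vA.
    have : v \in unmatched P VL by apply/unmatchedP; split => //; exists p.
    by rewrite U0 inE.
  move: ip e; case: (f p) => x s ip e; have [xp lp] := ends_in e.
  exact: (out_path ip (nv _ xp) (nv _ lp)).1.
move=> p q; rewrite !PminusE => /andP[pP _] /andP[qP _]; exact: Hd.
Qed.

Lemma a_bwd : EDP VL (induced E VL) (inner_pairs P VL) ->
  EDP (V :\: VL) (induced E (V :\: VL)) (P :\: inner_pairs P VL) -> EDP V E P.
Proof.
move=> [fL [HpL HdL]] [g [Hpg Hdg]].
exists (fun p : {set T} => if p \subset VL then fL p else g p); split.
  move=> p pP; case: ifP => sp.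
    have pPL : p \in inner_pairs P VL by rewrite inE pP sp.
    have [ip e] := HpL p pPL; split => //.
    exact: (is_path_mono ip subVL (@adj_induced_sub _ E VL)).
  have pP' : p \in P :\: inner_pairs P VL by rewrite PminusE pP sp.
  have [ip e] := Hpg p pP'; split => //.
  exact: (is_path_mono ip (subsetDl V VL) (@adj_induced_sub _ E (V :\: VL))).
move=> p q pP qP npq; case: ifP => sp; case: ifP => sq.
- by apply: HdL => //; rewrite inE ?pP ?qP ?sp ?sq.
- have qP' : q \in P :\: inner_pairs P VL by rewrite PminusE qP sq.
  have pPL : p \in inner_pairs P VL by rewrite inE pP sp.
  apply: disjP => e e1 e2.
  exact: (pedges_sep e1 (pedges_subV (HpL p pPL).1 e1) (pedges_subV (Hpg q qP').1 e2) disjVL).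
- have pP' : p \in P :\: inner_pairs P VL by rewrite PminusE pP sp.
  have qPL : q \in inner_pairs P VL by rewrite inE qP sq.
  apply: disjP => e e1 e2.
  exact: (pedges_sep e2 (pedges_subV (HpL q qPL).1 e2) (pedges_subV (Hpg p pP').1 e1) disjVL).
- by apply: Hdg => //; rewrite PminusE ?pP ?qP ?sp ?sq.
Qed.

Lemma ps_facts s : unmatched P VL = [set s] ->
  s \in VL /\ exists ps, [/\ ps \in P, s \in ps, ~~ (ps \subset VL) &
    forall p v, p \in P -> ~~ (p \subset VL) -> p != ps -> v \in p -> v \notin VL].
Proof.
move=> U1; have : s \in unmatched P VL by rewrite U1 set11.
case/unmatchedP => sA [ps [psP sps nps]]; split => //; exists ps; split => //.
move=> p v pP np nps' vp; apply/negP => vA.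
have : v \in unmatched P VL by apply/unmatchedP; split => //; exists p.
rewrite U1 inE => /eqP ev; subst v.
by move/eqP: nps'; apply; apply: (uP pP psP vp sps).
Qed.

Lemma adj_sub_U (E1 E2 : {set {set T}}) u v : adj E1 u v -> adj (E1 :|: E2) u v.
Proof. by rewrite /adj in_setU => ->. Qed.

Lemma b_fwd s : unmatched P VL = [set s] -> EDP V E P ->
  EDP ((V :\: VL) :|: [set s]) (induced E (V :\: VL) :|: [set [set y; s]]) (P :\: inner_pairs P VL).
Proof.
move=> U1 [f [Hp Hd]].
have [sA [ps [psP sps nps Hout]]] := ps_facts U1.
have [ip e] := Hp ps psP.
have sin : s \in ends (f ps) by rewrite e.
have [w [ipw ew pw]] := reorient ip sin.
have lnot : last s w \notin VL.
  by move: nps; rewrite -e -ew /ends /= subUset !sub1set sA.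
have /and3P[pw' uw aw] : [&& path (adj E) s w, uniq (s :: w) & all (fun v => v \in V) (s :: w)] := ipw.
case: (split_cross cr pw' uw sA) => [al | [s1 [s2 [ew2 l1 a1 a2]]]].
  by move/allP: al => /(_ _ (mem_last s w)); rewrite (negbTE lnot).
rewrite {}ew2 in ipw ew pw pw' uw aw lnot.
move: pw'; rewrite cat_path l1 /= => /and3P[_ _ py].
have uy : uniq (y :: s2).
  by move: uw; have -> : uniq (s :: s1 ++ y :: s2) = uniq ((s :: s1) ++ (y :: s2)) by []; rewrite cat_uniq => /and3P[].
have ay : all (fun v => v \in V :\: VL) (y :: s2).
  apply/allP => v vin; rewrite inE (allP a2 v vin) /=.
  by apply: (allP aw); rewrite inE mem_cat vin !orbT.
set V' := (V :\: VL) :|: [set s]; set E' := induced E (V :\: VL) :|: [set [set y; s]].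
have sE' : forall u v, adj (induced E (V :\: VL)) u v -> adj E' u v.
  by move=> u v; rewrite /adj in_setU => ->.
have sV' : V :\: VL \subset V' by apply: subsetUl.
have eps : ends (s, y :: s2) = ps by rewrite -e -ew /ends /= last_cat l1.
have Hq : forall q, q \in P -> ~~ (q \subset VL) -> q != ps ->
    is_path (V :\: VL) (induced E (V :\: VL)) (f q) /\ all (fun v => v \in V :\: VL) ((f q).1 :: (f q).2).
  move=> q qP nq nqps; have [iq eq] := Hp q qP; move: iq eq; case: (f q) => x r iq eq.
  have [xq lq] := ends_in eq.
  exact: (out_path iq (Hout _ _ qP nq nqps xq) (Hout _ _ qP nq nqps lq)).
exists (fun p => if p == ps then (s, y :: s2) else f p); split.
  move=> p; rewrite PminusE => /andP[pP np]; case: eqP => [-> | /eqP nps']; last first.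
    have [iq _] := Hq p pP np nps'; split; last by have [] := Hp p pP.
    exact: (is_path_mono iq sV' sE').
  split => //; apply/and3P; split.
  - change (adj E' s y && path (adj E') y s2).
    rewrite /adj in_setU in_set1 set2C' eqxx orbT /=.
    exact: (sub_path sE' (path_induced py ay)).
  - change ((s \notin y :: s2) && uniq (y :: s2)).
    rewrite uy andbT; apply/negP => /(allP a2); by rewrite sA.
  - change ((s \in V') && all (fun v => v \in V') (y :: s2)).
    rewrite /V' in_setU in_set1 eqxx orbT; apply/allP => v /(allP ay) vin.
    by rewrite in_setU vin.
have D : forall q, q \in P -> ~~ (q \subset VL) -> q != ps ->
    [disjoint pedges (s, y :: s2) & pedges (f q)].
  move=> q qP nq nqps; apply: disjP => ed; rewrite pedges_cons => /setU1P [-> | e1] e2.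
    have := pedges_sub (Hq q qP nq nqps).2 e2; rewrite subUset !sub1set inE sA.
    by case/andP.
  have e1' : ed \in pedges (f ps) by rewrite -pw pedges_cat in_setU in_setU1 e1 !orbT.
  have nq' : ps != q by rewrite eq_sym.
  by apply: (disjE (Hd ps q psP qP nq') e1' e2).
move=> p q; rewrite !PminusE => /andP[pP np] /andP[qP nq] npq.
case: (eqVneq p ps) => [ep | nps']; case: (eqVneq q ps) => [eq' | nqs] /=.
- by rewrite ep eq' eqxx in npq.
- by apply: D.
- by rewrite disjoint_sym; apply: D.
- exact: Hd.
Qed.

Lemma b_bwd s : unmatched P VL = [set s] ->
  EDP VL (induced E VL) (pairs_with P VL s l) ->
  EDP ((V :\: VL) :|: [set s]) (induced E (V :\: VL) :|: [set [set y; s]]) (P :\: inner_pairs P VL) ->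
  EDP V E P.
Proof.
move=> U1 [fL [HpL HdL]] [g [Hpg Hdg]].
have [sA [ps [psP sps nps Hout]]] := ps_facts U1.
set V' := (V :\: VL) :|: [set s]; set E' := induced E (V :\: VL) :|: [set [set y; s]].
have sVL : s \notin V :\: VL by rewrite inE sA.
have adjE'in : forall u v, u \in V :\: VL -> v \in V :\: VL -> adj E' u v ->
    adj (induced E (V :\: VL)) u v.
  move=> u v uo vo; rewrite /adj in_setU in_set1 => /orP[//|/eqP e].
  have : s \in [set u; v] by rewrite e set22.
  by case/set2P => es; move: sVL; rewrite es ?uo ?vo.
have psP' : ps \in P :\: inner_pairs P VL by rewrite PminusE psP nps.
have [ig eg] := Hpg ps psP'.
have sin : s \in ends (g ps) by rewrite eg.
have [w [ipw ew pw]] := reorient ig sin.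
have /and3P[pw' uw aw] : [&& path (adj E') s w, uniq (s :: w) & all (fun v => v \in V') (s :: w)] := ipw.
case: w ipw ew pw pw' uw aw => [|z s'] ipw ew pw pw' uw aw.
  by have := ends_neq psP (etrans ew eg); rewrite eqxx.
move: pw' => /andP[asz ps'].
have ez : z = y.
  move: asz; rewrite /adj in_setU in_set1 => /orP[|/eqP e].
    by rewrite inE => /andP[_]; rewrite subUset !sub1set (negbTE sVL).
  have : z \in [set y; s] by rewrite -e set22.
  case/set2P => // zs; move: uw; rewrite zs /= inE eqxx //.
subst z.
have ay : all (fun v => v \in V :\: VL) (y :: s').
  apply/allP => v vin; have vin' : v \in s :: y :: s' by rewrite inE vin orbT.
  have := allP aw v vin'.
  rewrite /V' in_setU in_set1 => /orP[//|/eqP vs].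
  by move: uw; rewrite /= -vs vin.
have py : path (adj E) y s'.
  apply: (path_rel ps' ay) => u v uo vo a; apply: adj_induced_sub; exact: adjE'in.
have uy : uniq (y :: s') by case/andP: uw.
have [q [pq aq uq lq dq]] : exists q, [/\ path (adj E) s q, all (fun v => v \in VL) (s :: q),
    uniq (s :: q), last s q = l &
    forall q', q' \in inner_pairs P VL -> [disjoint pedges (s, q) & pedges (fL q')]].
  case: (eqVneq s l) => [esl|nsl].
    exists [::]; split => //=; first by rewrite sA.
    by move=> q' _; rewrite pedges_nil; apply: disjP => ? ; rewrite inE.
  have slP : [set s; l] \in pairs_with P VL s l by rewrite /pairs_with (negbTE nsl) in_setU in_set1 eqxx orbT.
  have [iL eL] := HpL _ slP.
  have sin' : s \in ends (fL [set s; l]) by rewrite eL set21.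
  have [q [iq eq pq]] := reorient iL sin'.
  have /and3P[pq' uq aq] : [&& path (adj (induced E VL)) s q, uniq (s :: q) & all (fun v => v \in VL) (s :: q)] := iq.
  exists q; split => //.
  - exact: (sub_path (@adj_induced_sub _ E VL) pq').
  - by apply: ends_last => //; rewrite eq eL.
  move=> q' qPL; rewrite pq disjoint_sym; apply: HdL.
  - by rewrite /pairs_with in_setU qPL.
  - exact: slP.
  apply/eqP => eqs; move: qPL; rewrite inE eqs => /andP[slP' _].
  have := uP slP' psP (set21 s l) sps => esp.
  by move: nps; rewrite -esp subUset !sub1set sA lVL.
have innerOK : forall p, p \in P -> p \subset VL -> is_path V E (fL p) /\ ends (fL p) = p.
  move=> p pP sp; have pPL : p \in pairs_with P VL s l by rewrite /pairs_with in_setU inE pP sp.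
  have [ip ep] := HpL p pPL; split => //.
  exact: (is_path_mono ip subVL (@adj_induced_sub _ E VL)).
have outOK : forall p, p \in P -> ~~ (p \subset VL) -> p != ps ->
    is_path (V :\: VL) (induced E (V :\: VL)) (g p) /\ ends (g p) = p.
  move=> p pP np nps'; have pP' : p \in P :\: inner_pairs P VL by rewrite PminusE pP np.
  have [ip ep] := Hpg p pP'; split => //.
  move: ip ep; case: (g p) => x r ip ep; have [xp lp] := ends_in ep.
  have snp : s \notin p by apply/negP => sp; move/eqP: nps'; apply; exact: (uP pP psP sp sps).
  have crs : cross E' (~: [set s]) y s.
    move=> u v a; rewrite !inE negbK => us /eqP vs; subst v; split => //.
    move: a; rewrite /adj in_setU in_set1 => /orP[|/eqP e].
      by rewrite inE subUset !sub1set (negbTE sVL) !andbF.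
    have : u \in [set y; s] by rewrite -e set21.
    by case/set2P => // es; rewrite es eqxx in us.
  have /and3P[pr ur ar] : [&& path (adj E') x r, uniq (x :: r) & all (fun v => v \in V') (x :: r)] := ip.
  have xs : x \in ~: [set s] by rewrite !inE; apply/eqP => ex; rewrite -ex xp in snp.
  have ls : last x r \in ~: [set s] by rewrite !inE; apply/eqP => ex; rewrite -ex lp in snp.
  have al := both_in crs pr ur xs ls.
  have ao : all (fun v => v \in V :\: VL) (x :: r).
    apply/allP => v vin; have := allP ar v vin; rewrite /V' in_setU => /orP[//|vs].
    by have := allP al v vin; rewrite !inE; move: vs; rewrite inE => ->.
  apply/and3P; split => //.
  by apply: (path_rel pr ao) => u v uo vo; exact: adjE'in.
exists (fun p => if p == ps then (s, q ++ y :: s') else if p \subset VL then fL p else g p); split.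
  move=> p pP; case: eqP => [-> | /eqP nps'].
    split.
      apply/and3P; split.
      - change (path (adj E) s (q ++ y :: s')); rewrite cat_path pq lq /= py andbT.
        exact: lyE.
      - change (uniq ((s :: q) ++ (y :: s'))); rewrite cat_uniq uq uy andbT andTb.
        apply/hasPn => v vin; apply/negP => vq.
        have := allP aq v vq; have := allP ay v vin; rewrite inE => /andP[nv _] vA.
        by rewrite vA in nv.
      - change (all (fun v => v \in V) ((s :: q) ++ (y :: s'))); rewrite all_cat.
        apply/andP; split; apply/allP => v vin.
          exact: (subsetP subVL _ (allP aq v vin)).
        by have := allP ay v vin; rewrite inE => /andP[].
    by rewrite -eg -ew /ends /= last_cat lq.
  case: ifP => sp; first exact: innerOK.
  have [ip ep] := outOK p pP (negbT sp) nps'; split => //.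
  exact: (is_path_mono ip (subsetDl V VL) (@adj_induced_sub _ E (V :\: VL))).
have EdgeL : forall p e, p \in P -> p \subset VL -> e \in pedges (fL p) -> e \subset VL.
  move=> p e pP sp; have pPL : p \in pairs_with P VL s l by rewrite /pairs_with in_setU inE pP sp.
  exact: (pedges_subV (HpL p pPL).1).
have EdgeO : forall p e, p \in P -> ~~ (p \subset VL) -> p != ps -> e \in pedges (g p) -> e \subset V :\: VL.
  move=> p e pP np nps'; exact: (pedges_subV (outOK p pP np nps').1).
have Dps : forall p, p \in P -> p != ps ->
    [disjoint pedges (s, q ++ y :: s') & pedges (if p \subset VL then fL p else g p)].
  move=> p pP nps'; case: ifP => sp; apply: disjP => e;
    rewrite pedges_cat lq in_setU => /orP[e1|/setU1P[e2|e3]] e4.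
  - have pPL : p \in inner_pairs P VL by rewrite inE pP sp.
    exact: (disjE (dq p pPL) e1 e4).
  - by have := EdgeL p e pP sp e4; rewrite e2 subUset !sub1set (negbTE yVL) andbF.
  - exact: (pedges_sep e3 (EdgeL p e pP sp e4) (pedges_sub ay e3) disjVL).
  - exact: (pedges_sep e1 (pedges_sub aq e1) (EdgeO p e pP (negbT sp) nps' e4) disjVL).
  - by have := EdgeO p e pP (negbT sp) nps' e4; rewrite e2 subUset !sub1set inE lVL.
  - have pP' : p \in P :\: inner_pairs P VL by rewrite PminusE pP sp.
    have e3' : e \in pedges (g ps) by rewrite -pw pedges_cons in_setU1 e3 orbT.
    have nps2 : ps != p by rewrite eq_sym.
    exact: (disjE (Hdg ps p psP' pP' nps2) e3' e4).
move=> p r pP rP npr.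
case: (eqVneq p ps) => [ep | np]; case: (eqVneq r ps) => [er | nr].
- by rewrite ep er eqxx in npr.
- by rewrite /=; apply: Dps.
- by rewrite /= disjoint_sym; apply: Dps.
rewrite /=.
case: ifP => sp; case: ifP => sr.
- by apply: HdL => //; rewrite /pairs_with in_setU inE ?pP ?rP ?sp ?sr.
- by apply: disjP => e e1 e2; exact: (pedges_sep e1 (EdgeL p e pP sp e1) (EdgeO r e rP (negbT sr) nr e2) disjVL).
- by apply: disjP => e e1 e2; exact: (pedges_sep e2 (EdgeL r e rP sr e2) (EdgeO p e pP (negbT sp) np e1) disjVL).
- by apply: Hdg => //; rewrite PminusE ?pP ?rP ?sp ?sr.
Qed.
End Main.

Theorem mainTheorem8 (T : finType) (V : {set T}) (E P X : {set {set T}})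
    (VL : {set T}) (l y : T) :
  wf_graph V E -> wf_pairs V P ->
  (forall p q v, p \in P -> q \in P -> v \in p -> v \in q -> p = q) ->
  feedback_edge_set V E X ->
  component (V :\: incident X) (induced E (V :\: incident X)) VL ->
  [set l; y] \in E -> l \in VL -> y \in incident X ->
  (forall a b, [set a; b] \in E -> a \in VL -> b \in incident X -> a = l /\ b = y) ->
  let EL := induced E VL in
  let PL := inner_pairs P VL in
  let U := unmatched P VL in
  (* (a) *)
  ((U = set0 -> EDP VL EL PL ->
     (EDP V E P <-> EDP (V :\: VL) (induced E (V :\: VL)) (P :\: PL))) /\
  (* (b) *)
   (forall s, U = [set s] -> EDP VL EL (pairs_with P VL s l) ->
     (EDP V E P <->
      EDP ((V :\: VL) :|: [set s]) (induced E (V :\: VL) :|: [set [set y; s]]) (P :\: PL))) /\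
  (* (c) *)
   ((2 <= #|U| \/ (U = set0 /\ ~ EDP VL EL PL) \/
     (exists s, U = [set s] /\ ~ EDP VL EL (pairs_with P VL s l))) ->
    ~ EDP V E P)).
Proof.
move=> wfG wfP uP [XE _] [u0 [u0V comp]] lyE lVL yY Hly.
cbv zeta.
have subVL0 : forall v, v \in VL -> v \in V :\: incident X by move=> v /comp [].
have subVL : VL \subset V by apply/subsetP => v /subVL0; rewrite inE => /andP[].
have yV : y \in V.
  case/bigcupP: yY => e eX ye; have := (wfG e (subsetP XE e eX)).2.
  by move/subsetP; apply.
have yVL : y \notin VL by apply/negP => /subVL0; rewrite inE yY.
have cr : cross E VL l y.
  move=> a b ab aA bA; case: (boolP (b \in incident X)) => bY; first exact: Hly.
  exfalso; move/negP: bA; apply.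
  have bV : b \in V by have := (wfG _ ab).2; rewrite subUset !sub1set => /andP[].
  have [aV [s [ps als ls]]] := (comp a).1 aA.
  apply/comp; split; first by rewrite inE bY bV.
  exists (rcons s b); split; last by rewrite last_rcons.
    rewrite rcons_path ps ls /=; apply: adj_induced => //.
    by rewrite inE bY bV.
  rewrite -cats1 -cat_cons all_cat als /= inE bY bV.
  done.
split; last split.
- move=> U0 HL; split => G.
    by eapply a_fwd; eauto.
  by eapply a_bwd; eauto.
- move=> s U1 HL; split => G.
    by eapply b_fwd; eauto.
  by eapply b_bwd; eauto.
case => [two | [[U0 nL] | [s [U1 nL]]]] G.
- by eapply c_two; eauto.
- by apply: nL; eapply c_restrict; eauto.
- have sU : s \in unmatched P VL by rewrite U1 set11.
  by apply: nL; eapply c_one; eauto.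
Qed.
Print Assumptions mainTheorem8.
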